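(* Let $\mathscr{C}=\{C_k\}_{k\in I}$ be a polycylinder packing of $\mathbb{R}^{n+2}$, fix distinct $i,j\in I$, and let $x$ be a point of the core $a_i$ of $C_i$. Let $y$ and $z$ be points on the circle $S_x(2/\sqrt{3})$. If each of $y$ and $z$ is equidistant from $C_i$ and $C_j$, then the angle $\angle yxz$ is at most $2\arccos(\sqrt{3}-1)\approx 85.8828^\circ$.
   Context: A polycylinder is a subset of $\mathbb{R}^{n+2}$ isometric to $\mathbb{D}^2\times\mathbb{R}^n$, where $\mathbb{D}^2$ is the closed unit disk. A polycylinder packing of $\mathbb{R}^{n+2}$ is a countable family of polycylinders with mutually disjoint interiors. The core $a_k$ of a polycylinder $C_k$ is the $n$-dimensional affine subspace such that $C_k$ is the set of points at distance at most $1$ from $a_k$. For $x\in a_i$, $p_x$ is the $2$-dimensional affine plane through $x$ orthogonal to $a_i$, and $S_x(r)$ denotes the circle of radius $r$ in $p_x$ centered at $x$. *)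

(* Defs.v *)
From HB Require Import structures.
From mathcomp Require Import all_boot all_order all_algebra.
From mathcomp Require Import all_classical all_reals all_analysis.
Set Implicit Arguments. Unset Strict Implicit. Unset Printing Implicit Defensive.
Import Order.TTheory GRing.Theory Num.Theory.
Import numFieldNormedType.Exports.
Local Open Scope classical_set_scope.
Local Open Scope ring_scope.

Section Polycylinders.
Variable R : realType.

Definition dotp (m : nat) (u v : 'rV[R]_m) : R := \sum_(i < m) u 0 i * v 0 i.
Definition enorm (m : nat) (u : 'rV[R]_m) : R := Num.sqrt (dotp u u).

Definition set_dist (m : nat) (p : 'rV[R]_m) (A : set 'rV[R]_m) : R :=
  inf [set enorm (p - q) | q in A].

(* An n-dimensional affine subspace of R^(n+2): c + rowspace U,
   U having n orthonormal rows. *)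
Definition orthonormal_rows (n m : nat) (U : 'M[R]_(n, m)) : Prop :=
  U *m U^T = 1%:M.

Definition core (n : nat) (c : 'rV[R]_(n.+2)) (U : 'M[R]_(n, n.+2))
  : set 'rV[R]_(n.+2) := [set c + v *m U | v in [set: 'rV[R]_n]].

Definition polycyl (n : nat) (c : 'rV[R]_(n.+2)) (U : 'M[R]_(n, n.+2))
  : set 'rV[R]_(n.+2) :=
  [set p | exists2 q, core c U q & enorm (p - q) <= 1].

Definition polycyl_packing (n : nat) (I : countType)
  (c : I -> 'rV[R]_(n.+2)) (U : I -> 'M[R]_(n, n.+2)) : Prop :=
  (forall k, orthonormal_rows (U k)) /\
  (forall k l, k <> l ->
     interior (polycyl (c k) (U k)) `&` interior (polycyl (c l) (U l)) = set0).

(* S_x(r): circle of radius r centered at x in the 2-plane p_x through x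
   orthogonal to the core directions (rows of U) *)
Definition circle_Sx (n : nat) (U : 'M[R]_(n, n.+2)) (x : 'rV[R]_(n.+2)) (r : R)
  : set 'rV[R]_(n.+2) :=
  [set y | (forall k : 'I_n, dotp (y - x) (row k U) = 0) /\ enorm (y - x) = r].

Definition angle (m : nat) (y x z : 'rV[R]_m) : R :=
  acos (dotp (y - x) (z - x) / (enorm (y - x) * enorm (z - x))).

End Polycylinders.

(* Main.v *)
Require Import Defs.
From HB Require Import structures.
From mathcomp Require Import all_boot all_order all_algebra.
From mathcomp Require Import all_classical all_reals all_analysis.
From mathcomp Require Import ring lra.
Import Order.TTheory GRing.Theory Num.Theory.
Import numFieldNormedType.Exports.
Local Open Scope classical_set_scope.
Local Open Scope ring_scope.


Section H.
Context {R : realType}.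
Context {m : nat}.
Implicit Types u v w : 'rV[R]_m.

Lemma dotpC u v : dotp u v = dotp v u.
Proof. by apply: eq_bigr => i _; rewrite mulrC. Qed.

Lemma dotpDl u v w : dotp (u + v) w = dotp u w + dotp v w.
Proof. by rewrite /dotp -big_split; apply: eq_bigr => i _; rewrite !mxE mulrDl. Qed.

Lemma dotpZl (a : R) u v : dotp (a *: u) v = a * dotp u v.
Proof. by rewrite /dotp mulr_sumr; apply: eq_bigr => i _; rewrite !mxE mulrA. Qed.

Lemma dotpZr (a : R) u v : dotp u (a *: v) = a * dotp u v.
Proof. by rewrite dotpC dotpZl dotpC. Qed.

Lemma dotpNl u v : dotp (- u) v = - dotp u v.
Proof. by rewrite -scaleN1r dotpZl mulN1r. Qed.

Lemma dotpNr u v : dotp u (- v) = - dotp u v.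
Proof. by rewrite dotpC dotpNl dotpC. Qed.

Lemma dotp_ge0 u : 0 <= dotp u u.
Proof. by apply: sumr_ge0 => i _; rewrite -expr2 sqr_ge0. Qed.

Lemma enorm_ge0 u : 0 <= enorm u.
Proof. exact: sqrtr_ge0. Qed.

Lemma enorm_sq u : enorm u ^+ 2 = dotp u u.
Proof. by rewrite sqr_sqrtr // dotp_ge0. Qed.

Lemma dotp_expand u v : dotp (u + v) (u + v) = dotp u u + 2 * dotp u v + dotp v v.
Proof. rewrite !dotpDl ![dotp _ (u + v)]dotpC !dotpDl (dotpC v u); ring. Qed.

Lemma CS u v : dotp u v ^+ 2 <= dotp u u * dotp v v.
Proof.
set A := dotp u u; set B := dotp u v; set C := dotp v v.
have key t : 0 <= A + 2 * t * B + t ^+ 2 * C.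
  have := dotp_ge0 (u + t *: v).
  rewrite dotp_expand !dotpZl !dotpZr -/A -/B -/C; nra.
have C0 : 0 <= C by exact: dotp_ge0.
have A0 : 0 <= A by exact: dotp_ge0.
case: (ltrP 0 C) => Cp.
  have := key (- B / C).
  have -> : A + 2 * (- B / C) * B + (- B / C) ^+ 2 * C = A - B ^+ 2 / C.
    by field; rewrite gt_eqF.
  rewrite subr_ge0 ler_pdivrMr //; lra.
have C00 : C = 0 by apply/eqP; rewrite eq_le Cp C0.
have [B0|Bn] := eqVneq B 0; first by rewrite B0 C00; nra.
have := key (- (A + 1) / (2 * B)).
rewrite C00 mulr0 addr0.
have -> : A + 2 * (- (A + 1) / (2 * B)) * B = -1.
  by field; rewrite Bn.
lra.
Qed.

Lemma enormD u v : enorm (u + v) <= enorm u + enorm v.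
Proof.
have hB : dotp u v <= enorm u * enorm v.
  have := CS u v; rewrite -!enorm_sq.
  have := enorm_ge0 u; have := enorm_ge0 v.
  set a := enorm u; set b := enorm v; set B := dotp u v.
  move=> b0 a0 h.
  have ab0 : 0 <= a * b by rewrite mulr_ge0.
  rewrite -exprMn in h; move: ab0 h; set c := a * b => c0 h; nra.
rewrite -ler_sqr ?nnegrE ?addr_ge0 ?enorm_ge0 //.
rewrite enorm_sq dotp_expand sqrrD !enorm_sq mulr2n.
lra.
Qed.

Lemma enormZ (a : R) u : enorm (a *: u) = `|a| * enorm u.
Proof.
by rewrite /enorm dotpZl dotpC dotpZl mulrA -expr2 sqrtrM ?sqr_ge0 // sqrtr_sqr.
Qed.

Lemma enormN u : enorm (- u) = enorm u.
Proof. by rewrite -scaleN1r enormZ normrN normr1 mul1r. Qed.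

Lemma enormB u v : enorm (u - v) = enorm (v - u).
Proof. by rewrite -enormN opprB. Qed.

Lemma enorm0 : enorm (0 : 'rV[R]_m) = 0.
Proof. by rewrite -(scale0r 0) enormZ normr0 mul0r. Qed.

End H.


Lemma int_lem (R : realType) (n : nat) (c : 'rV[R]_(n.+2)) (U : 'M[R]_(n, n.+2)) a q :
  core c U a -> enorm (q - a) < 1 -> interior (polycyl c U) q.
Proof.
move=> ca hq.
set d := 1 - enorm (q - a).
have d0 : 0 < d by rewrite subr_gt0.
rewrite /interior /=.
apply/nbhs_ballP; exists (d / (n.+2)%:R).
  by rewrite /= divr_gt0.
move=> p Bp.
exists a => //.
have Bp' : forall k, `|q 0 k - p 0 k| < d / n.+2%:R.
  move=> k. move: Bp. rewrite -ball_normE /= => Bp.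
  apply: le_lt_trans Bp.
  have -> : `|q - p| = mx_norm (q - p) by [].
  rewrite mx_normrE.
  have := @le_bigmax _ _ _ 0 (fun ij : 'I_1 * 'I_n.+2 => `|(q - p) ij.1 ij.2|) (ord0, k).
  by rewrite /= !mxE.
have hd : enorm (p - q) <= d.
  rewrite -(ger0_norm (ltW d0)) -sqrtr_sqr /enorm ler_sqrt ?sqr_ge0 //.
  rewrite /dotp.
  apply: le_trans (_ : \sum_(k < n.+2) (d / n.+2%:R) ^+ 2 <= _).
    apply: ler_sum => k _; rewrite -expr2 !mxE.
    rewrite -[X in X <= _]ger0_norm ?sqr_ge0 // normrX.
    rewrite ler_pXn2r ?nnegrE ?normr_ge0 ?divr_ge0 ?ltW //.
    by rewrite distrC; exact: Bp'.
  rewrite big_const_ord iter_addr_0 -[_ *+ n.+2]mulr_natr.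
  have N1 : 1 <= n.+2%:R :> R by rewrite ler1n.
  have -> : (d / n.+2%:R) ^+ 2 * n.+2%:R = d ^+ 2 / n.+2%:R.
    by field; rewrite -natrD pnatr_eq0 addn_eq0.
  rewrite ler_pdivrMr ?(lt_le_trans ltr01) //.
  have : 0 <= d ^+ 2 by rewrite sqr_ge0.
  nra.
have := enormD (p - q) (q - a).
have -> : p - q + (q - a) = p - a by rewrite addrA subrK.
rewrite /d in hd; lra.
Qed.


Arguments int_lem {R n c U a q}.

Lemma sep_lem (R : realType) (n : nat) (I : countType)
  (c : I -> 'rV[R]_(n.+2)) (U : I -> 'M[R]_(n, n.+2)) k l w p :
  polycyl_packing c U -> k <> l ->
  core (c k) (U k) w -> core (c l) (U l) p -> 2 <= enorm (w - p).
Proof.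
move=> [_ disj] kl cw cp.
rewrite leNgt; apply/negP => h.
set q := 2^-1 *: (w + p).
have e1 : q - p = 2^-1 *: (w - p).
  by apply/rowP => t; rewrite !mxE; field.
have e2 : q - w = 2^-1 *: (p - w).
  by apply/rowP => t; rewrite !mxE; field.
have ik : interior (polycyl (c k) (U k)) q.
  apply: (int_lem cw); rewrite e2 enormZ enormB ger0_norm //; lra.
have il : interior (polycyl (c l) (U l)) q.
  apply: (int_lem cp); rewrite e1 enormZ ger0_norm //; lra.
have := disj k l kl.
move/seteqP => [H1 _].
by have := H1 q (conj ik il).
Qed.

Lemma core_mid (R : realType) (n : nat) (c : 'rV[R]_(n.+2)) (U : 'M[R]_(n, n.+2)) w w' :
  core c U w -> core c U w' -> core c U (2^-1 *: (w + w')).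
Proof.
move=> [v _ <-] [v' _ <-].
exists (2^-1 *: (v + v')) => //.
rewrite -scalemxAl mulmxDl.
by apply/rowP => t; rewrite !mxE; field.
Qed.


Lemma sd_lb {R : realType} {m : nat} (p : 'rV[R]_m) (A : set 'rV[R]_m) :
  has_lbound [set enorm (p - q) | q in A].
Proof. by exists 0 => _ [q _ <-]; exact: enorm_ge0. Qed.

Lemma sd_up {R : realType} {n : nat} (c : 'rV[R]_(n.+2)) (U : 'M[R]_(n, n.+2)) x p r :
  core c U x -> 1 < r -> enorm (p - x) = r -> set_dist p (polycyl c U) <= r - 1.
Proof.
move=> cx r1 hp.
have r0 : 0 < r by lra.
set q0 := x + r^-1 *: (p - x).
have e1 : q0 - x = r^-1 *: (p - x) by rewrite /q0 addrC addKr.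
have e2 : p - q0 = (1 - r^-1) *: (p - x).
  by apply/rowP => t; rewrite !mxE; field; rewrite gt_eqF.
rewrite /set_dist; apply: (ge_inf (sd_lb p (polycyl c U))).
exists q0.
  have ri : 0 <= r^-1 by rewrite invr_ge0 ltW.
  by exists x => //; rewrite e1 enormZ hp ger0_norm // mulVf ?gt_eqF.
rewrite e2 enormZ hp ger0_norm.
  by field; rewrite gt_eqF.
rewrite subr_ge0 invr_le1 // ?unitfE ?gt_eqF //; lra.
Qed.

Lemma sd_approx {R : realType} {n : nat} (c : 'rV[R]_(n.+2)) (U : 'M[R]_(n, n.+2)) p t :
  set_dist p (polycyl c U) < t -> exists w, core c U w /\ enorm (p - w) < t + 1.
Proof.
move=> ht.
have hinf : has_inf [set enorm (p - q) | q in polycyl c U].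
  split; last exact: sd_lb.
  exists (enorm (p - c)); exists c => //.
  exists c; last by rewrite subrr enorm0 ler01.
  by exists 0 => //; rewrite mul0mx addr0.
have eps0 : 0 < t - set_dist p (polycyl c U) by rewrite subr_gt0.
have [e [q [w cw hw] <-] he] := inf_adherent eps0 hinf.
exists w; split => //.
have := enormD (p - q) (q - w).
rewrite addrA subrK.
rewrite /set_dist in ht he.
lra.
Qed.

Theorem mainTheorem6 (R : realType) (n : nat) (I : countType)
  (c : I -> 'rV[R]_(n.+2)) (U : I -> 'M[R]_(n, n.+2))
  (i j : I) (x y z : 'rV[R]_(n.+2)) :
  polycyl_packing c U ->
  i <> j ->
  core (c i) (U i) x ->
  circle_Sx (U i) x (2 / Num.sqrt 3) y ->
  circle_Sx (U i) x (2 / Num.sqrt 3) z ->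
  set_dist y (polycyl (c i) (U i)) = set_dist y (polycyl (c j) (U j)) ->
  set_dist z (polycyl (c i) (U i)) = set_dist z (polycyl (c j) (U j)) ->
  angle y x z <= 2 * acos (Num.sqrt 3 - 1).
Proof.
move=> pack ij xi [_ ry] [_ rz] hy hz.
set s := Num.sqrt 3 in ry rz *.
have s0 : 0 < s by rewrite sqrtr_gt0.
have s2 : s ^+ 2 = 3 by rewrite sqr_sqrtr.
set r := 2 / s in ry rz.
have rs : r * s = 2 by rewrite /r mulfVK ?gt_eqF.
have s_lt2 : s < 2 by nra.
have s_gt1 : 1 < s by nra.
have r1 : 1 < r by rewrite /r ltr_pdivlMr // mul1r.
have r_lt2 : r < 2 by rewrite /r ltr_pdivrMr //; nra.
set u := y - x; set v := z - x.
have hD : 2 - r <= enorm (2^-1 *: (u + v)).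
  rewrite leNgt; apply/negP => hD.
  set Dv := enorm (2^-1 *: (u + v)) in hD.
  set eps := (2 - r - Dv) / 2.
  have eps0 : 0 < eps by rewrite /eps; lra.
  have hyi := sd_up _ _ x y r xi r1 ry.
  have hzi := sd_up _ _ x z r xi r1 rz.
  rewrite hy in hyi; rewrite hz in hzi.
  have [w [cw hw]] := @sd_approx _ _ (c j) (U j) y (r - 1 + eps) ltac:(lra).
  have [w' [cw' hw']] := @sd_approx _ _ (c j) (U j) z (r - 1 + eps) ltac:(lra).
  have := @sep_lem _ _ _ c U j i _ _ pack (fun h => ij (esym h)) (core_mid _ _ _ _ _ _ cw cw') xi.
  have -> : 2^-1 *: (w + w') - x = 2^-1 *: (u + v) - 2^-1 *: ((y - w) + (z - w')).
    by apply/rowP => t; rewrite !mxE; field.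
  have := enormD (2^-1 *: (u + v)) (- (2^-1 *: ((y - w) + (z - w')))).
  rewrite enormN (enormZ 2^-1 (y - w + (z - w'))) (ger0_norm (_ : 0 <= 2^-1 :> R)); last by rewrite invr_ge0 ler0n.
  have := enormD (y - w) (z - w').
  rewrite -/Dv /eps in hD hw hw' *.
  lra.
have hA : dotp u u = r ^+ 2 by rewrite -enorm_sq ry.
have hC : dotp v v = r ^+ 2 by rewrite -enorm_sq rz.
set B := dotp u v.
have hE : enorm (2^-1 *: (u + v)) ^+ 2 = 4^-1 * (2 * r ^+ 2 + 2 * B).
  rewrite enormZ exprMn enorm_sq dotp_expand hA hC.
  rewrite (ger0_norm (_ : 0 <= 2^-1 :> R)); last by rewrite invr_ge0 ler0n.
  by rewrite -/B; field.
have hB1 : 2 * (2 - r) ^+ 2 - r ^+ 2 <= B.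
  have h0 : 0 <= 2 - r by lra.
  have : (2 - r) ^+ 2 <= enorm (2^-1 *: (u + v)) ^+ 2.
    by rewrite ler_pXn2r ?nnegrE ?enorm_ge0.
  rewrite hE; lra.
have hB2 : B <= r ^+ 2.
  have := dotp_ge0 (u + - v).
  rewrite dotp_expand dotpNr !dotpNl dotpNr opprK hA hC -/B; lra.
have ang : angle y x z = acos (B / (r * r)) by rewrite /angle ry rz.
rewrite ang.
set k := B / (r * r).
set kap := 2 * (s - 1) ^+ 2 - 1.
have r0 : 0 < r by lra.
have kk : kap <= k.
  rewrite /k ler_pdivlMr ?(mulr_gt0 r0 r0) //.
  have -> : kap * (r * r) = 2 * (s * r - r) ^+ 2 - r ^+ 2 by rewrite /kap; ring.
  by rewrite [s * r]mulrC rs.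
have k1 : k <= 1.
  rewrite /k ler_pdivrMr ?(mulr_gt0 r0 r0) // mul1r -expr2 //.
have kapm1 : -1 <= kap by rewrite /kap; nra.
have k_in : -1 <= k <= 1 by apply/andP; split => //; lra.
have s1in : -1 <= s - 1 <= 1 by apply/andP; split; lra.
set a := acos (s - 1).
have a0 : 0 <= a by exact: acos_ge0.
have api : a <= pi by exact: acos_lepi.
have ca : cos a = s - 1 by rewrite /a acosK // in_itv /=.
have pi0 : 0 < pi := pi_gt0 R.
have ahalf : a <= pi / 2.
  rewrite leNgt; apply/negP => h.
  have hp : (0 <= pi / 2 :> R) && (pi / 2 <= pi :> R) by apply/andP; split; lra.
  have := @ltr_cos R (pi / 2) a.
  rewrite !in_itv /= a0 api h cos_pihalf ca => /(_ hp isT).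
  lra.
have ta : 2 * a = a *+ 2 by rewrite mulr_natl.
have c2 : cos (2 * a) = kap by rewrite ta cos_mulr2n ca /kap mulr_natl.
have t0 : 0 <= 2 * a by lra.
have tpi : 2 * a <= pi by lra.
have ak0 : 0 <= acos k by exact: acos_ge0.
have akpi : acos k <= pi by exact: acos_lepi.
rewrite leNgt; apply/negP => h.
have := @ltr_cos R (2 * a) (acos k).
rewrite !in_itv /= ak0 akpi t0 tpi h c2 acosK; last by rewrite in_itv.
move=> /(_ isT isT).
lra.
Qed.
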